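(* Let $f$ be a smooth function on an open planar set whose graph is an indefinite improper affine sphere with affine normal $(0,0,1)$ (equivalently $\det D^2f=-1$) and strictly positive Pick invariant. Let $p(u,v)$ be a planar parameterization by asymptotic parameters, i.e. $D^2f(p_u,p_u)=D^2f(p_v,p_v)=0$, oriented so that $D^2f(p_u,p_v)=[p_u,p_v]$. Then: (1) $D^2f\,p_u=R\,p_u$ and $D^2f\,p_v=-R\,p_v$; (2) setting $\pi_1(p)=p+R\nabla f(p)$ and $\pi_2(p)=p-R\nabla f(p)$, the map $\pi_1\circ p$ is constant along each asymptotic line $v=v_0$ and $\pi_2\circ p$ is constant along each asymptotic line $u=u_0$.
   Context: $[X,Y]$ denotes the determinant of the $2\times 2$ matrix with columns $X,Y$; $R$ is the counterclockwise rotation by ninety degrees; $D^2f$ is the Hessian of $f$, used both as a bilinear form and as a matrix. Asymptotic parameters of the graph surface $q(u,v)=(p(u,v),f(p(u,v)))$ are parameters with $[q_u,q_v,q_{uu}]=[q_u,q_v,q_{vv}]=0$, which amounts to $D^2f(p_u,p_u)=D^2f(p_v,p_v)=0$. *)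

(* Defs.v *)
From Stdlib Require Import Reals List.
From Coquelicot Require Import Coquelicot.
Open Scope R_scope.

(* Coordinates of the plane are indexed by bool: false = first, true = second. *)

Definition partial (i : bool) (g : R -> R -> R) : R -> R -> R :=
  fun x y => if i then Derive (fun t => g x t) y else Derive (fun t => g t y) x.

Fixpoint iter_partial (l : list bool) (g : R -> R -> R) : R -> R -> R :=
  match l with
  | nil => g
  | i :: l' => partial i (iter_partial l' g)
  end.

Definition open2 (U : R -> R -> Prop) : Prop :=
  open (fun z : R * R => U (fst z) (snd z)).

Definition smooth_on (U : R -> R -> Prop) (g : R -> R -> R) : Prop :=
  forall (l : list bool) (x y : R), U x y ->
    ex_derive (fun t => iter_partial l g t y) x /\
    ex_derive (fun t => iter_partial l g x t) y /\
    continuous (fun z : R * R => iter_partial l g (fst z) (snd z)) (x, y).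

Definition hess (f : R -> R -> R) (i j : bool) : R -> R -> R :=
  partial i (partial j f).

Definition hess_det (f : R -> R -> R) (x y : R) : R :=
  hess f false false x y * hess f true true x y
  - hess f false true x y * hess f true false x y.

Definition hess_app (f : R -> R -> R) (x y : R) (a : R * R) : R * R :=
  (hess f false false x y * fst a + hess f false true x y * snd a,
   hess f true false x y * fst a + hess f true true x y * snd a).

Definition hess_bil (f : R -> R -> R) (x y : R) (a b : R * R) : R :=
  fst a * fst (hess_app f x y b) + snd a * snd (hess_app f x y b).

Definition bracket (a b : R * R) : R := fst a * snd b - snd a * fst b.

Definition rot (a : R * R) : R * R := (- snd a, fst a).

Definition vopp (a : R * R) : R * R := (- fst a, - snd a).
Definition vadd (a b : R * R) : R * R := (fst a + fst b, snd a + snd b).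
Definition vsub (a b : R * R) : R * R := (fst a - fst b, snd a - snd b).

Definition grad (f : R -> R -> R) (z : R * R) : R * R :=
  (partial false f (fst z) (snd z), partial true f (fst z) (snd z)).

Definition pi1 (f : R -> R -> R) (z : R * R) : R * R := vadd z (rot (grad f z)).
Definition pi2 (f : R -> R -> R) (z : R * R) : R * R := vsub z (rot (grad f z)).

(* Pick invariant of the graph of f when det D^2 f = -1 (so the Blaschke metric
   is h = D^2 f and the cubic form is C = (1/2) D^3 f):
   J = 1/(n(n-1)) h^{ij} h^{kl} h^{mn} C_{ikm} C_{jln}, n = 2. *)
Definition sumb (g : bool -> R) : R := g false + g true.

Definition hinv (f : R -> R -> R) (x y : R) (i j : bool) : R :=
  (match i, j with
   | false, false => hess f true true x y
   | true, true => hess f false false x y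
   | false, true => - hess f false true x y
   | true, false => - hess f true false x y
   end) / hess_det f x y.

Definition cubic (f : R -> R -> R) (x y : R) (i j k : bool) : R :=
  / 2 * iter_partial (i :: j :: k :: nil) f x y.

Definition pick (f : R -> R -> R) (x y : R) : R :=
  / 2 * sumb (fun i => sumb (fun j => sumb (fun k => sumb (fun l =>
    sumb (fun m => sumb (fun n =>
      hinv f x y i j * hinv f x y k l * hinv f x y m n
      * cubic f x y i k m * cubic f x y j l n)))))).

Definition p_u (p1 p2 : R -> R -> R) (u v : R) : R * R :=
  (partial false p1 u v, partial false p2 u v).
Definition p_v (p1 p2 : R -> R -> R) (u v : R) : R * R :=
  (partial true p1 u v, partial true p2 u v).

(* Main.v *)
Require Import Defs.
From Stdlib Require Import Reals List Lra Psatz.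
From Coquelicot Require Import Coquelicot.
Open Scope R_scope.

Lemma solve2 a1 a2 b1 b2 w1 w2 : a1*b2-a2*b1<>0 -> a1*w1+a2*w2=0 -> b1*w1+b2*w2=0 -> w1=0/\w2=0.
Proof.
  intros HD H1 H2.
  assert (E1 : (a1*b2-a2*b1)*w1 = b2*(a1*w1+a2*w2) - a2*(b1*w1+b2*w2)) by ring.
  assert (E2 : (a1*b2-a2*b1)*w2 = a1*(b1*w1+b2*w2) - b1*(a1*w1+a2*w2)) by ring.
  rewrite H1, H2 in E1, E2.
  split; [destruct (Rmult_integral _ _ (eq_trans E1 (ltac:(ring) : b2*0 - a2*0 = 0)))|
          destruct (Rmult_integral _ _ (eq_trans E2 (ltac:(ring) : a1*0 - b1*0 = 0)))]; tauto.
Qed.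

Lemma linalg (h11 h12 h21 h22 a1 a2 b1 b2 : R) :
 h11*h22 - h12*h21 = -1 ->
 a1*(h11*a1+h12*a2) + a2*(h21*a1+h22*a2) = 0 ->
 b1*(h11*b1+h12*b2)+b2*(h21*b1+h22*b2) = 0 ->
 a1*(h11*b1+h12*b2)+a2*(h21*b1+h22*b2) = a1*b2-a2*b1 ->
 a1*b2-a2*b1 <> 0 ->
 (h11*a1+h12*a2 = -a2 /\ h21*a1+h22*a2 = a1 /\ h11*b1+h12*b2 = b2 /\ h21*b1+h22*b2 = -b1) /\
 (h11*a1+h21*a2 = -a2 /\ h12*a1+h22*a2 = a1 /\ h11*b1+h21*b2 = b2 /\ h12*b1+h22*b2 = -b1).
Proof.
  intros Hdet Ha Hb Hab HD.
  set (D := a1*b2-a2*b1) in *.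
  set (c := b1*(h11*a1+h12*a2) + b2*(h21*a1+h22*a2)).
  assert (Id : (a1*(h11*a1+h12*a2) + a2*(h21*a1+h22*a2))*(b1*(h11*b1+h12*b2)+b2*(h21*b1+h22*b2))
     - (a1*(h11*b1+h12*b2)+a2*(h21*b1+h22*b2))*c = D*D*(h11*h22 - h12*h21)) by (unfold c, D; ring).
  rewrite Ha, Hb, Hab, Hdet in Id.
  assert (Hc : c = D).
  { assert (D*(c - D) = 0) by lra.
    destruct (Rmult_integral _ _ H); [contradiction|lra]. }
  unfold c in Hc.
  destruct (solve2 a1 a2 b1 b2 (h11*a1+h12*a2 + a2) (h21*a1+h22*a2 - a1) HD) as [A1 A2].
  { unfold D in *; lra. } { unfold D in *; lra. }
  destruct (solve2 a1 a2 b1 b2 (h11*b1+h12*b2 - b2) (h21*b1+h22*b2 + b1) HD) as [B1 B2].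
  { unfold D in *; lra. } { unfold D in *; lra. }
  destruct (solve2 a1 a2 b1 b2 (h11*a1+h21*a2 + a2) (h12*a1+h22*a2 - a1) HD) as [C1 C2].
  { unfold D in *; lra. } { unfold D in *; lra. }
  destruct (solve2 a1 a2 b1 b2 (h11*b1+h21*b2 - b2) (h12*b1+h22*b2 + b1) HD) as [D1 D2].
  { unfold D in *; lra. } { unfold D in *; lra. }
  lra.
Qed.

Lemma smooth_ex_diff U g : smooth_on U g ->
  forall n l x y, U x y -> ex_diff_n (iter_partial l g) n x y.
Proof.
  intros Hs n; induction n as [|n IH]; intros l x y Hxy;
  destruct (Hs l x y Hxy) as (H1 & H2 & H3).
  - simpl; split; [|exact I]. apply continuity_2d_pt_filterlim. exact H3.
  - simpl; split; [apply continuity_2d_pt_filterlim; exact H3|].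
    split; [exact H1|]. split; [exact H2|].
    split; [exact (IH (false :: l) x y Hxy)| exact (IH (true :: l) x y Hxy)].
Qed.

Lemma smooth_diff U g l x y : open2 U -> smooth_on U g -> U x y ->
  differentiable_pt_lim (iter_partial l g) x y
    (iter_partial (false :: l) g x y) (iter_partial (true :: l) g x y).
Proof.
  intros Ho Hs Hxy.
  assert (Hloc : locally_2d (fun u v => ex_diff_n (iter_partial l g) 2 u v) x y).
  { apply locally_2d_locally.
    generalize (Ho (x,y) Hxy). apply filter_imp.
    intros [u v] H. simpl in H. exact (smooth_ex_diff U g Hs 2 l u v H). }
  destruct (Taylor_Lagrange_2d _ 1 x y Hloc) as [D HD].
  intros eps.
  assert (Hdel : locally_2d (fun u v => Rmax (Rabs (u - x)) (Rabs (v - y)) <= eps / (Rabs D + 1)) x y).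
  { assert (Hp : 0 < eps / (Rabs D + 1)).
    { apply Rdiv_lt_0_compat; [apply cond_pos|]. generalize (Rabs_pos D); lra. }
    exists (mkposreal _ Hp). simpl. intros u v Hu Hv.
    apply Rmax_lub; lra. }
  generalize (locally_2d_and _ _ _ _ HD Hdel).
  apply locally_2d_impl, locally_2d_forall.
  intros u v [H1 H2].
  assert (E : DL_pol 1 (iter_partial l g) x y (u - x) (v - y) =
    iter_partial l g x y + (iter_partial (false :: l) g x y * (u - x) + iter_partial (true :: l) g x y * (v - y))).
  { unfold DL_pol, differential, partial_derive, Binomial.C. simpl. unfold partial. field. }
  rewrite E in H1.
  set (M := Rmax (Rabs (u - x)) (Rabs (v - y))) in *.
  assert (HM : 0 <= M) by (unfold M; apply Rle_trans with (Rabs (u-x)); [apply Rabs_pos|apply Rmax_l]).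
  replace (iter_partial l g u v - iter_partial l g x y -
     (iter_partial (false :: l) g x y * (u - x) + iter_partial (true :: l) g x y * (v - y)))
   with (iter_partial l g u v - (iter_partial l g x y +
     (iter_partial (false :: l) g x y * (u - x) + iter_partial (true :: l) g x y * (v - y)))) by ring.
  apply Rle_trans with (1 := H1).
  assert (HD1 : 0 < Rabs D + 1) by (generalize (Rabs_pos D); lra).
  assert (H3 : M * (Rabs D + 1) <= eps).
  { apply Rmult_le_reg_r with (/ (Rabs D + 1)). apply Rinv_0_lt_compat; lra.
    replace (M * (Rabs D + 1) * / (Rabs D + 1)) with M by (field; lra). exact H2. }
  generalize (Rle_abs D). intros. simpl. nra.
Qed.
Lemma const_interval (F : R -> R) u1 u2 (P : R -> Prop) :
  (forall u, Rmin u1 u2 <= u <= Rmax u1 u2 -> P u) -> (forall u, P u -> is_derive F u 0) -> F u1 = F u2.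
Proof.
  intros HP HF.
  destruct (MVT_gen F u1 u2 (fun _ => 0)) as [c [_ Hc]].
  - intros x Hx. apply HF, HP. lra.
  - intros x Hx. apply derivable_continuous_pt. exists 0. apply is_derive_Reals. apply HF, HP. exact Hx.
  - lra.
Qed.
Lemma is_derive_eq (F : R -> R) x l l' : is_derive F x l -> l = l' -> is_derive F x l'.
Proof. intros H ->; exact H. Qed.
Lemma lin_sum (F G : R -> R) x a b : is_derive F x a -> is_derive G x b ->
  is_derive (fun t => F t + G t) x (a + b).
Proof. intros. apply (is_derive_plus F G x a b); assumption. Qed.
Lemma lin_opp (F : R -> R) x a : is_derive F x a ->
  is_derive (fun t => - F t) x (- a).
Proof. intros. apply (is_derive_opp F x a); assumption. Qed.

Theorem mainTheorem4
  (Omega : R -> R -> Prop) (f : R -> R -> R)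
  (W : R -> R -> Prop) (p1 p2 : R -> R -> R) :
  open2 Omega -> smooth_on Omega f ->
  (forall x y, Omega x y -> hess_det f x y = -1) ->
  (forall x y, Omega x y -> pick f x y > 0) ->
  open2 W -> smooth_on W p1 -> smooth_on W p2 ->
  (forall u v, W u v -> Omega (p1 u v) (p2 u v)) ->
  (forall u v, W u v -> bracket (p_u p1 p2 u v) (p_v p1 p2 u v) <> 0) ->
  (forall u v, W u v ->
     hess_bil f (p1 u v) (p2 u v) (p_u p1 p2 u v) (p_u p1 p2 u v) = 0 /\
     hess_bil f (p1 u v) (p2 u v) (p_v p1 p2 u v) (p_v p1 p2 u v) = 0) ->
  (forall u v, W u v ->
     hess_bil f (p1 u v) (p2 u v) (p_u p1 p2 u v) (p_v p1 p2 u v)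
     = bracket (p_u p1 p2 u v) (p_v p1 p2 u v)) ->
  (forall u v, W u v ->
     hess_app f (p1 u v) (p2 u v) (p_u p1 p2 u v) = rot (p_u p1 p2 u v) /\
     hess_app f (p1 u v) (p2 u v) (p_v p1 p2 u v) = vopp (rot (p_v p1 p2 u v)))
  /\
  (forall u1 u2 v0,
     (forall u, Rmin u1 u2 <= u <= Rmax u1 u2 -> W u v0) ->
     pi1 f (p1 u1 v0, p2 u1 v0) = pi1 f (p1 u2 v0, p2 u2 v0))
  /\
  (forall u0 v1 v2,
     (forall v, Rmin v1 v2 <= v <= Rmax v1 v2 -> W u0 v) ->
     pi2 f (p1 u0 v1, p2 u0 v1) = pi2 f (p1 u0 v2, p2 u0 v2)).
Proof.
  intros Ho Hf Hdet _ HoW Hp1 Hp2 Hmap Hbr Has Hor.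
  assert (Key : forall u v, W u v ->
    let h11 := hess f false false (p1 u v) (p2 u v) in
    let h12 := hess f false true (p1 u v) (p2 u v) in
    let h21 := hess f true false (p1 u v) (p2 u v) in
    let h22 := hess f true true (p1 u v) (p2 u v) in
    let a1 := partial false p1 u v in let a2 := partial false p2 u v in
    let b1 := partial true p1 u v in let b2 := partial true p2 u v in
 (h11*a1+h12*a2 = -a2 /\ h21*a1+h22*a2 = a1 /\ h11*b1+h12*b2 = b2 /\ h21*b1+h22*b2 = -b1) /\
 (h11*a1+h21*a2 = -a2 /\ h12*a1+h22*a2 = a1 /\ h11*b1+h21*b2 = b2 /\ h12*b1+h22*b2 = -b1)).
  { intros u v Huv. intros.
    generalize (Hdet _ _ (Hmap u v Huv)) (Has u v Huv) (Hor u v Huv) (Hbr u v Huv).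
    unfold hess_det, hess_bil, hess_app, bracket, p_u, p_v; simpl.
    intros H1 [H2 H3] H4 H5. apply linalg; assumption. }
  assert (Pu : forall q u v, smooth_on W q -> W u v -> is_derive (fun t => q t v) u (partial false q u v)).
  { intros q u v Hq Huv. apply Derive_correct. exact (proj1 (Hq nil u v Huv)). }
  assert (Pv : forall q u v, smooth_on W q -> W u v -> is_derive (fun t => q u t) v (partial true q u v)).
  { intros q u v Hq Huv. apply Derive_correct. exact (proj1 (proj2 (Hq nil u v Huv))). }
  assert (Df : forall j u v, W u v -> differentiable_pt_lim (partial j f) (p1 u v) (p2 u v)
     (hess f false j (p1 u v) (p2 u v)) (hess f true j (p1 u v) (p2 u v))).
  { intros j u v Huv. exact (smooth_diff Omega f (j :: nil) _ _ Ho Hf (Hmap u v Huv)). }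
  assert (Cu : forall j u v, W u v -> is_derive (fun t => partial j f (p1 t v) (p2 t v)) u
     (hess f false j (p1 u v) (p2 u v) * partial false p1 u v + hess f true j (p1 u v) (p2 u v) * partial false p2 u v)).
  { intros j u v Huv. apply is_derive_Reals. apply derivable_pt_lim_comp_2d.
    - apply Df; exact Huv.
    - apply is_derive_Reals, Pu; assumption.
    - apply is_derive_Reals, Pu; assumption. }
  assert (Cv : forall j u v, W u v -> is_derive (fun t => partial j f (p1 u t) (p2 u t)) v
     (hess f false j (p1 u v) (p2 u v) * partial true p1 u v + hess f true j (p1 u v) (p2 u v) * partial true p2 u v)).
  { intros j u v Huv. apply is_derive_Reals. apply (derivable_pt_lim_comp_2d (partial j f) (fun t => p1 u t) (fun t => p2 u t)).
    - apply Df; exact Huv.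
    - apply is_derive_Reals, Pv; assumption.
    - apply is_derive_Reals, Pv; assumption. }
  split; [|split].
  - intros u v Huv. destruct (Key u v Huv) as [[K1 [K2 [K3 K4]]] _].
    unfold hess_app, rot, vopp, p_u, p_v; cbn [fst snd]. rewrite K1, K2, K3, K4. split; f_equal; ring.
  - intros u1 u2 v0 Hin. apply injective_projections.
    + apply (const_interval (fun t => fst (pi1 f (p1 t v0, p2 t v0))) u1 u2 (fun u => W u v0) Hin).
      intros u Huv. destruct (Key u v0 Huv) as [_ [K1 [K2 [K3 K4]]]].
      eapply is_derive_eq.
      * apply (lin_sum (fun t => p1 t v0) (fun t => - partial true f (p1 t v0) (p2 t v0))).
        apply Pu; assumption. apply lin_opp. apply Cu; exact Huv.
      * rewrite K2. simpl. lra.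
    + apply (const_interval (fun t => snd (pi1 f (p1 t v0, p2 t v0))) u1 u2 (fun u => W u v0) Hin).
      intros u Huv. destruct (Key u v0 Huv) as [_ [K1 [K2 [K3 K4]]]].
      eapply is_derive_eq.
      * apply (lin_sum (fun t => p2 t v0) (fun t => partial false f (p1 t v0) (p2 t v0))).
        apply Pu; assumption. apply Cu; exact Huv.
      * rewrite K1. simpl. lra.
  - intros u0 v1 v2 Hin. apply injective_projections.
    + apply (const_interval (fun t => fst (pi2 f (p1 u0 t, p2 u0 t))) v1 v2 (fun v => W u0 v) Hin).
      intros v Huv. destruct (Key u0 v Huv) as [_ [K1 [K2 [K3 K4]]]].
      eapply is_derive_eq.
      * apply (lin_sum (fun t => p1 u0 t) (fun t => - - partial true f (p1 u0 t) (p2 u0 t))).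
        apply Pv; assumption. apply lin_opp, lin_opp. apply Cv; exact Huv.
      * rewrite K4. simpl. lra.
    + apply (const_interval (fun t => snd (pi2 f (p1 u0 t, p2 u0 t))) v1 v2 (fun v => W u0 v) Hin).
      intros v Huv. destruct (Key u0 v Huv) as [_ [K1 [K2 [K3 K4]]]].
      eapply is_derive_eq.
      * apply (lin_sum (fun t => p2 u0 t) (fun t => - partial false f (p1 u0 t) (p2 u0 t))).
        apply Pv; assumption. apply lin_opp. apply Cv; exact Huv.
      * rewrite K3. simpl. lra.
Qed.
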